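(* Let $C$ and $C'$ be two cycle graphs with the same degree sequence. If $e\in E(C)\cap E(C')$, then there exists a u-switch sequence transforming $C$ into $C'$: 2-switches $\tau_1,\dots,\tau_k$ ($k\ge0$) such that, with $C_0=C$ and $C_i=\tau_i(C_{i-1})$, each $\tau_i$ is a u-switch over $C_{i-1}$ and $C_k=C'$.
   Context: Graphs are finite, simple, undirected, labeled with vertex set $[n]$; the degree sequence of $G$ is $(d_1,\dots,d_n)$ with $d_i$ the degree of vertex $i$. A unicyclic graph is a connected graph with exactly one cycle. For vertices $a,b,c,d$, $A=\binom{a\ b}{c\ d}$ is interchangeable in $G$ if $ab,cd\in E(G)$, $\{a,b\}\cap\{c,d\}=\varnothing$, $ac,bd\notin E(G)$; the 2-switch $\tau_A$ sends $G$ to $G-ab-cd+ac+bd$ if $A$ is interchangeable and to $G$ otherwise (trivial). A nontrivial 2-switch $\tau$ over a unicyclic $U$ is a u-switch if $\tau(U)$ is unicyclic. *)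

(* Defs.v *)
From mathcomp Require Import all_boot.
Set Implicit Arguments. Unset Strict Implicit. Unset Printing Implicit Defensive.

(* A graph on the labeled vertex set [n] = 'I_n is its edge set:
   a set of 2-element subsets of 'I_n. *)
Definition graph (n : nat) := {set {set 'I_n}}.

Definition simple_graph n (G : graph n) : bool := [forall e in G, #|e| == 2].

Definition adj n (G : graph n) : rel 'I_n := fun x y => [set x; y] \in G.

Definition deg n (G : graph n) (i : 'I_n) : nat := #|[set e in G | i \in e]|.
Definition deg_seq n (G : graph n) : {ffun 'I_n -> nat} := [ffun i => deg G i].

Definition connected n (G : graph n) : bool :=
  [forall x, forall y, connect (adj G) x y].

Definition is_cycle n (F : graph n) : bool :=
  [&& F != set0, simple_graph F,
      [forall x, (deg F x != 0) ==> (deg F x == 2)] &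
      [forall x, forall y, ((deg F x != 0) && (deg F y != 0)) ==> connect (adj F) x y]].

Definition cycle_graph n (G : graph n) : bool :=
  [&& simple_graph G, connected G & [forall x, deg G x == 2]].

Definition unicyclic n (G : graph n) : bool :=
  [&& simple_graph G, connected G &
      #|[set F : graph n | (F \subset G) && is_cycle F]| == 1].

(* A 2-switch A = (a b ; c d) is a 4-tuple of vertices. *)
Definition switch n := ('I_n * 'I_n * 'I_n * 'I_n)%type.

Definition interchangeable n (G : graph n) (A : switch n) : bool :=
  let: (a, b, c, d) := A in
  [&& [set a; b] \in G, [set c; d] \in G,
      [disjoint [set a; b] & [set c; d]],
      [set a; c] \notin G & [set b; d] \notin G].

Definition tau n (A : switch n) (G : graph n) : graph n :=
  let: (a, b, c, d) := A in
  if interchangeable G A then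
    ((G :\ [set a; b]) :\ [set c; d]) :|: [set [set a; c]; [set b; d]]
  else G.

Definition u_switch n (U : graph n) (A : switch n) : Prop :=
  tau A U != U /\ unicyclic (tau A U).

Fixpoint u_switch_seq n (G : graph n) (s : seq (switch n)) (G' : graph n) : Prop :=
  match s with
  | [::] => G = G'
  | A :: s' => u_switch G A /\ u_switch_seq (tau A G) s' G'
  end.

(* Main.v *)
Require Import Defs.
From mathcomp Require Import all_boot.
From mathcomp Require Import zify.
Set Implicit Arguments. Unset Strict Implicit. Unset Printing Implicit Defensive.


Fixpoint pedges {n} (x : 'I_n) (s : seq 'I_n) : graph n :=
  if s is y :: s' then [set x; y] |: pedges y s' else set0.
Definition pe {n} (s : seq 'I_n) : graph n := if s is x :: s' then pedges x s' else set0.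
Definition cyc {n} (s : seq 'I_n) : graph n :=
  if s is x :: s' then [set last x s'; x] |: pedges x s' else set0.

Lemma pedges_cat n (x : 'I_n) s t : pedges x (s ++ t) = pedges x s :|: pedges (last x s) t.
Proof.
elim: s x => [|y s IH] x /=; first by rewrite set0U.
by rewrite IH setUA.
Qed.

Lemma pe_rcons n (s : seq 'I_n) x :
  pe (rcons s x) = pe s :|: (if s is y :: s' then [set [set last y s'; x]] else set0).
Proof.
case: s => [|y s] /=; first by rewrite setU0.
by rewrite -cats1 pedges_cat /= setU0.
Qed.

Lemma pe_rev n (s : seq 'I_n) : pe (rev s) = pe s.
Proof.
elim: s => [|x s IH] //.
rewrite rev_cons pe_rcons IH.
case: s {IH} => [|y s2] /=; first by rewrite setU0.
rewrite rev_cons; case: (rev s2) => [|z r] /=; rewrite ?last_rcons.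
  by rewrite setUC [[set y; x]]setUC.
by rewrite setUC [[set y; x]]setUC.
Qed.

Lemma mem_pedges n (x : 'I_n) s e v : e \in pedges x s -> v \in e -> v \in x :: s.
Proof.
elim: s x => [|y s IH] x /=; first by rewrite inE.
rewrite !inE => /orP [/eqP -> | /IH H]; first by rewrite !inE => /orP [] ->; rewrite ?orbT.
by move=> /H; rewrite inE => ->; rewrite orbT.
Qed.

Lemma mem_cyc n (s : seq 'I_n) e v : e \in cyc s -> v \in e -> v \in s.
Proof.
case: s => [|x s] /=; first by rewrite inE.
rewrite !inE => /orP [/eqP -> | /mem_pedges H /H //].
rewrite !inE => /orP [/eqP ->|->]; last by [].
by rewrite -in_cons mem_last.
Qed.

Lemma cyc_catC n (s1 s2 : seq 'I_n) : cyc (s1 ++ s2) = cyc (s2 ++ s1).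
Proof.
case: s1 => [|x a]; first by rewrite cats0.
case: s2 => [|y b]; first by rewrite cats0.
rewrite /= !pedges_cat !last_cat /=.
apply/setP => e; rewrite !inE.
by do !case: (_ == _); do !case: (_ \in _).
Qed.

Lemma cyc_rev n (s : seq 'I_n) : cyc (rev s) = cyc s.
Proof.
case: s => [|x s] //.
have := pe_rev (x :: s).
rewrite (lastI x s) rev_rcons /= => ->.
rewrite -lastI /=.
suff -> : last (last x s) (rev (belast x s)) = x by rewrite [[set x; _]]setUC.
elim: s x => [|y s IH] x //=.
by rewrite rev_cons last_rcons.
Qed.

Lemma deg_cyc n (s : seq 'I_n) v : uniq s -> 2 < size s -> v \in s -> deg (cyc s) v = 2.
Proof.
move=> us ss vs; case/splitPr: vs us ss => s1 s2 us ss.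
rewrite cyc_catC; rewrite uniq_catC in us; rewrite size_cat addnC -size_cat in ss.
move: us ss; rewrite cat_cons; case: (s2 ++ s1) => [|u t]; first by [].
case/lastP: t => [|m w]; first by [].
move=> /= /andP [vn /andP [un _]] _.
rewrite !inE negb_or in vn; case/andP: vn => vu vn.
rewrite mem_rcons inE negb_or in un; case/andP: un => uw _.
rewrite /deg /= last_rcons.
have -> : [set e in [set w; v] |: ([set v; u] |: pedges u (rcons m w)) | v \in e]
   = [set [set w; v]; [set v; u]].
  apply/setP => e; rewrite !inE.
  case: eqP => [->|_] /=; first by rewrite !inE eqxx orbT.
  case: eqP => [->|_] /=; first by rewrite !inE eqxx.
  apply/negP => /andP [/mem_pedges H /H].
  by rewrite inE (negbTE vu) /= (negbTE vn).
rewrite cards2; case: eqP => // E.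
have : w \in [set v; u] by rewrite -E !inE eqxx.
rewrite !inE => /orP [] /eqP Ew.
  by move: vn; rewrite Ew mem_rcons inE eqxx.
by move: uw; rewrite Ew eqxx.
Qed.

Lemma pedges_simple n (x : 'I_n) s e : uniq (x :: s) -> e \in pedges x s -> #|e| = 2.
Proof.
elim: s x => [|y s IH] x /=; first by rewrite inE.
move=> /andP [xn us]; rewrite !inE => /orP [/eqP -> | /(IH _ us) //].
rewrite cards2; case: eqP => // E; by move: xn; rewrite E inE eqxx.
Qed.

Lemma cyc_simple n (s : seq 'I_n) : uniq s -> 1 < size s -> simple_graph (cyc s).
Proof.
case: s => [|x s] // us ss; apply/forallP => e; apply/implyP.
rewrite /= !inE => /orP [/eqP ->| /(pedges_simple us) -> //].
rewrite cards2 /=; case: s us ss => [|y s] // /andP [xn _] _ /=.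
have := mem_last y s; case: (last y s =P x) => [-> H|_ _] //; by rewrite H in xn.
Qed.

Lemma adj_sym n (G : graph n) : symmetric (adj G).
Proof. by move=> x y; rewrite /adj setUC. Qed.

Lemma path_connect n (G : graph n) x s : pedges x s \subset G -> forall y, y \in x :: s -> connect (adj G) x y.
Proof.
elim: s x => [|z s IH] x /= sub y; first by rewrite inE => /eqP ->.
rewrite inE => /orP [/eqP -> //| ys].
apply: (connect_trans (connect1 _)); last apply: IH ys.
  by rewrite /adj (subsetP sub) // !inE eqxx.
by apply: subset_trans sub; apply: subsetUr.
Qed.

Lemma cyc_cycle_graph n (s : seq 'I_n) : uniq s -> 2 < size s -> (forall v, v \in s) ->
  cycle_graph (cyc s).
Proof.
move=> us ss full; apply/and3P; split.
- by apply: cyc_simple; lia.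
- apply/forallP => x; apply/forallP => y.
  case: s us ss full => [|h t] // us ss full.
  have sub : pedges h t \subset cyc (h :: t) by apply: subsetUr.
  apply: (@connect_trans _ _ h); last exact: path_connect sub _ (full y).
  rewrite (sym_connect_sym (@adj_sym _ _)); exact: path_connect sub _ (full x).
- by apply/forallP => x; rewrite deg_cyc.
Qed.

Lemma deg_gt0 n (G : graph n) v : (deg G v != 0) = [exists e, (e \in G) && (v \in e)].
Proof.
rewrite /deg -lt0n card_gt0; apply/set0Pn/existsP => -[e]; rewrite ?inE => He; exists e => //.
by rewrite inE.
Qed.

Lemma prop n (G F : graph n) : cycle_graph G -> F \subset G -> F != set0 ->
  (forall v, deg F v != 0 -> deg F v = 2) -> F = G.
Proof.
case/and3P => sG cG dG sub nF dF.
have dG2 v : deg G v = 2 by apply/eqP; exact: (forallP dG v).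
have EF v : deg F v != 0 -> [set e in F | v \in e] = [set e in G | v \in e].
  move=> nz; apply/eqP; rewrite eqEcard; apply/andP; split.
    by apply/subsetP => e; rewrite !inE => /andP [eF ->]; rewrite (subsetP sub).
  by rewrite -/(deg G v) -/(deg F v) dG2 dF.
have step v w : deg F v != 0 -> [set v; w] \in G -> deg F w != 0.
  move=> nz vw; have : [set v; w] \in [set e in G | v \in e] by rewrite !inE vw eqxx.
  rewrite -(EF v nz) inE => /andP [vwF _].
  by rewrite deg_gt0; apply/existsP; exists [set v; w]; rewrite vwF !inE eqxx orbT.
case/set0Pn: nF => f fF.
have := forallP sG f; rewrite (subsetP sub f fF) /= => /cards2P [a [b [ab fE]]].
have da : deg F a != 0 by rewrite deg_gt0; apply/existsP; exists f; rewrite fF fE !inE eqxx.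
have all v : deg F v != 0.
  have := forallP (forallP cG a) v; case/connectP => p pth ->.
  clear ab fE; elim: p a da pth => [|w p IH] a da //= /andP [aw pth].
  apply: IH pth; exact: step aw.
apply/eqP; rewrite eqEsubset sub /=; apply/subsetP => e eG.
have := forallP sG e; rewrite eG => /cards2P [u [w [uw eE]]].
have : e \in [set e in G | u \in e] by rewrite inE eG eE !inE eqxx.
by rewrite -(EF u (all u)) inE => /andP [].
Qed.

Lemma cg_unicyclic n (G : graph n) : cycle_graph G -> G != set0 -> unicyclic G.
Proof.
move=> cg nG; have cg' := cg; case/and3P: cg' => sG cG dG.
apply/and3P; split => //.
apply/eqP; rewrite -(cards1 G); apply: eq_card => F; rewrite !inE.
apply/idP/idP.
  case/andP => sub /and4P [nF _ dF _]; apply/eqP; apply: prop => // v nz.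
  by apply/eqP; exact: (implyP (forallP dF v) nz).
move/eqP ->; rewrite subxx /=; apply/and4P; split => //.
  by apply/forallP => x; rewrite (eqP (forallP dG x)).
apply/forallP => x; apply/forallP => y; apply/implyP => _.
exact: (forallP (forallP cG x) y).
Qed.

Lemma two_set n (e : {set 'I_n}) l : #|e| = 2 -> l \in e -> exists w, w != l /\ e = [set l; w].
Proof.
move/eqP/cards2P => [a [b [ab ->]]]; rewrite !inE => /orP [] /eqP ->.
  by exists b; split => //; rewrite eq_sym.
by exists a; split => //; rewrite setUC.
Qed.

Lemma pe_catr n (s1 s2 : seq 'I_n) : pe s2 \subset pe (s1 ++ s2).
Proof.
case: s1 => [|x a] //=; rewrite pedges_cat.
apply: subset_trans (subsetUr _ _).
case: s2 => [|y b] /=; first by rewrite sub0set.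
exact: subsetUr.
Qed.

Lemma pe_rcons_sub n (s : seq 'I_n) x y : pe (rcons s x) \subset pe s :|: [set [set last y s; x]].
Proof. case: s => [|h s] /=; first by rewrite sub0set. by rewrite -cats1 pedges_cat /= setU0. Qed.

Lemma cg_struct n (G : graph n) : cycle_graph G -> G != set0 ->
  exists s : seq 'I_n, [/\ uniq s, 2 < size s, forall v, v \in s & G = cyc s].
Proof.
move=> cg nG; have cg' := cg; case/and3P: cg' => sG cG dG.
pose P k := [exists t : k.-tuple 'I_n, uniq t && (pe t \subset G)].
have exP : exists k, P k by exists 0; apply/existsP; exists [tuple]; rewrite /= sub0set.
have ubP : forall k, P k -> k <= n.
  move=> k /existsP [t /andP [ut _]].
  by rewrite -(size_tuple t) -(card_uniqP ut); apply: leq_trans (max_card _) _; rewrite card_ord.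
case: (ex_maxnP exP ubP) => K /existsP [t /andP [ut sub]] maxK.
have P_of s : uniq s -> pe s \subset G -> size s <= K.
  move=> us ps; apply: maxK; apply/existsP; exists (in_tuple s); by rewrite us ps.
case/set0Pn: nG => f fG.
have := forallP sG f; rewrite fG /= => /cards2P [a [b [ab fE]]].
have K2 : 2 <= K by apply: (P_of [:: a; b]); rewrite /= ?inE ?andbT // ?setU0 ?sub1set -?fE.
move: ut sub; case: t => s /= /eqP sK; rewrite -sK in K2.
case/lastP: s sK K2 => [|s0 l] //; case/lastP: s0 => [|m pr] //; rewrite ?size_rcons // => sK _ us sub.
have prl : [set pr; l] \in G.
  apply: (subsetP sub); rewrite pe_rcons; case: m {sub us sK} => [|h m] /=; first by rewrite !inE eqxx.
  by rewrite !inE last_rcons eqxx orbT.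
have [w [wG [wpr wl]]] : exists w, [/\ [set l; w] \in G, w != pr & w != l].
  pose S := [set e in G | l \in e].
  have : ~~ (S \subset [set [set pr; l]]).
    apply/negP => /subset_leq_card; rewrite cards1 -/(deg G l) (eqP (forallP dG l)) //.
  case/subsetPn => e; rewrite !inE => /andP [eG le] epl.
  have := forallP sG e; rewrite eG => /eqP c2; have [w [wl eE]] := two_set c2 le.
  exists w; split => //; first by rewrite -eE.
  apply/eqP => E; move: epl; by rewrite eE E setUC eqxx.
have wm : w \in m.
  apply/negPn/negP => wm.
  have : size (rcons (rcons (rcons m pr) l) w) <= K.
    apply: P_of.
      by rewrite rcons_uniq us andbT mem_rcons inE mem_rcons inE (negbTE wl) (negbTE wpr) (negbTE wm).
    apply: subset_trans (pe_rcons_sub _ _ l) _.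
    by rewrite subUset sub last_rcons sub1set wG.
  by rewrite !size_rcons -sK ltnn.
case/splitPr: wm us sub {sK} => m1 m2 us sub.
set c := w :: m2 ++ [:: pr; l].
have sc : rcons (rcons (m1 ++ w :: m2) pr) l = m1 ++ c by rewrite -!cats1 -!catA.
rewrite sc in us sub.
have uc : uniq c by move: us; rewrite cat_uniq => /and3P [].
have szc : 2 < size c by rewrite /c /= size_cat /= addn2.
have Fsub : cyc c \subset G.
  rewrite /c /= last_cat /=; apply/subsetP => e; rewrite !inE => /orP [/eqP -> // | He].
  apply: (subsetP sub); apply: (subsetP (pe_catr m1 c)); exact: He.
have GE : cyc c = G.
  apply: prop => //.
    by apply/set0Pn; exists [set l; w]; rewrite /c /= last_cat /= !inE eqxx.
  move=> v; rewrite deg_gt0 => /existsP [e /andP [eF ve]].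
  by apply: deg_cyc => //; exact: mem_cyc eF ve.
exists c; split => //.
move=> v; have : deg G v != 0 by rewrite (eqP (forallP dG v)).
by rewrite -GE deg_gt0 => /existsP [e /andP [eF ve]]; exact: mem_cyc eF ve.
Qed.

Lemma tau_neq n (G : graph n) A : interchangeable G A -> tau A G != G.
Proof.
case: A => [[[a b] c] d] I; rewrite /tau I; apply/eqP => E.
case/and5P: I => _ _ _ /negP H _; apply: H; rewrite -E !inE eqxx; by rewrite orbT.
Qed.

Lemma set2_neq n (a b c d : 'I_n) : a != c -> a != d -> [set a; b] != [set c; d].
Proof.
move=> ac ad; apply/eqP => E.
have : a \in [set c; d] by rewrite -E !inE eqxx.
by rewrite !inE (negbTE ac) (negbTE ad).
Qed.

Lemma last_neq n (z : 'I_n) T : uniq (z :: T) -> T != [::] -> last z T != z.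
Proof.
case: T => [|t T] // /= /andP [zn _] _.
by apply/eqP => E; move: zn; rewrite -E mem_last.
Qed.

Lemma two_opt n (x y z : 'I_n) M T : uniq (x :: M ++ y :: z :: T) -> T != [::] ->
  interchangeable (cyc (x :: M ++ y :: z :: T)) (last z T, x, y, z) /\
  tau (last z T, x, y, z) (cyc (x :: M ++ y :: z :: T)) = cyc (y :: rev M ++ x :: z :: T).
Proof.
move=> u Tn.
set vk := last z T.
set SS := x :: rcons M y. set TT := z :: T.
have eS : x :: M ++ y :: z :: T = SS ++ TT by rewrite /SS /TT /= cat_rcons.
rewrite eS cat_uniq in u; case/and3P: u => uS dST uT.
have disj v : v \in TT -> v \notin SS.
  by move=> vT; apply/negP => vS; move/hasP: dST; apply; exists v.
have xS : x \in SS by rewrite inE eqxx.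
have yS : y \in SS by rewrite /SS inE mem_rcons inE eqxx orbT.
have zT : z \in TT by rewrite inE eqxx.
have vkT : vk \in TT by apply: mem_last.
have neq u v : u \in SS -> v \in TT -> u != v.
  by move=> uS' vT; apply/eqP => E; move: (disj v vT); rewrite -E uS'.
have xy : x != y.
  by move: uS; rewrite /SS /= mem_rcons inE negb_or => /andP [/andP [] ].
have vkz : vk != z.
  exact: last_neq.
pose E0 := pe SS. pose PT := pedges z T.
have cross (e : {set 'I_n}) u v : u \in e -> v \in e -> u \in SS -> v \in TT -> (e \notin E0) && (e \notin PT).
  move=> ue ve uS' vT; apply/andP; split; apply/negP => H.
    by move: (disj v vT); rewrite (mem_pedges H ve).
  by move: (disj u (mem_pedges H ue)); rewrite uS'.
have GE e : (e \in cyc (SS ++ TT)) = [|| e == [set vk; x], e \in E0, e == [set y; z] | e \in PT].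
  by rewrite /E0 /PT /vk /SS /TT /= pedges_cat last_cat /= last_rcons !inE.
have E0r : pedges y (rcons (rev M) x) = E0 by rewrite /E0 -pe_rev /SS rev_cons rev_rcons.
have G'E e : (e \in cyc (y :: rev M ++ x :: z :: T)) = [|| e == [set vk; y], e \in E0, e == [set x; z] | e \in PT].
  by rewrite -cat_rcons /= pedges_cat last_cat /= last_rcons E0r !inE.
have i1 (a b : 'I_n) : a \in [set a; b] by rewrite !inE eqxx.
have i2 (a b : 'I_n) : b \in [set a; b] by rewrite !inE eqxx orbT.
have /andP [/negbTE c1a /negbTE c1b] := cross _ _ _ (i2 vk x) (i1 vk x) xS vkT.
have /andP [/negbTE c2a /negbTE c2b] := cross _ _ _ (i1 y z) (i2 y z) yS zT.
have /andP [/negbTE c3a /negbTE c3b] := cross _ _ _ (i2 vk y) (i1 vk y) yS vkT.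
have /andP [/negbTE c4a /negbTE c4b] := cross _ _ _ (i1 x z) (i2 x z) xS zT.
have vx : vk != x by rewrite eq_sym; apply: neq.
have vy : vk != y by rewrite eq_sym; apply: neq.
have zx : z != x by rewrite eq_sym; apply: neq.
have zy : z != y by rewrite eq_sym; apply: neq.
have xz : x != z by rewrite eq_sym.
have yz : y != z by rewrite eq_sym.
have xv : x != vk by rewrite eq_sym.
have yv : y != vk by rewrite eq_sym.
have zv : z != vk by rewrite eq_sym.
have yx : y != x by rewrite eq_sym.
have d12 : [set vk; x] != [set y; z] by apply: set2_neq.
have d13 : [set vk; x] != [set vk; y] by rewrite setUC [[set vk; y]]setUC; apply: set2_neq; rewrite // eq_sym.
have d14 : [set vk; x] != [set x; z] by apply: set2_neq.
have d23 : [set y; z] != [set vk; y] by rewrite setUC [[set vk; y]]setUC; apply: set2_neq; rewrite // eq_sym.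
have d24 : [set y; z] != [set x; z] by apply: set2_neq; rewrite // eq_sym.
have d34 : [set vk; y] != [set x; z] by apply: set2_neq.
have d31 : [set vk; y] != [set vk; x] by rewrite eq_sym.
have d32 : [set vk; y] != [set y; z] by rewrite eq_sym.
have d41 : [set x; z] != [set vk; x] by rewrite eq_sym.
have d42 : [set x; z] != [set y; z] by rewrite eq_sym.
have I : interchangeable (cyc (SS ++ TT)) (vk, x, y, z).
  apply/and5P; split.
  - by rewrite GE eqxx.
  - by rewrite GE eqxx !orbT.
  - apply/pred0P => u; rewrite /= !inE.
    by case: (u =P vk) => [E|_]; [subst u | case: (u =P x) => [E|_]; [subst u|]]; rewrite ?eqxx //= ?(negbTE vy) ?(negbTE vkz) ?(negbTE xy) ?(negbTE zx) ?(negbTE xz) ?(negbTE yz) ?(negbTE xv) ?(negbTE yv) ?(negbTE zv) ?(negbTE yx) ?(negbTE zy) ?(negbTE vx) ?andbF //=.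
  - by rewrite GE (negbTE d31) (negbTE d32) c3a c3b.
  - by rewrite GE (negbTE d41) (negbTE d42) c4a c4b.
split; first by rewrite eS.
rewrite eS.
have -> : tau (vk, x, y, z) (cyc (SS ++ TT)) = ((cyc (SS ++ TT) :\ [set vk; x]) :\ [set y; z]) :|: [set [set vk; y]; [set x; z]] by rewrite /tau I.
apply/setP => e; rewrite G'E !in_setU !in_setD1 GE !inE.
have F := (negbTE d12, negbTE d13, negbTE d14, negbTE d23, negbTE d24, negbTE d34, negbTE d31, negbTE d32, negbTE d41, negbTE d42).
case: (e =P [set vk; x]) => [->|_]; first by rewrite ?F ?c1a ?c1b.
case: (e =P [set y; z]) => [->|_]; first by rewrite ?F ?c2a ?c2b.
case: (e =P [set vk; y]) => [->|_]; first by rewrite ?orbT.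
case: (e =P [set x; z]) => [->|_]; first by rewrite ?orbT.
by rewrite /= orbF.
Qed.

Lemma pedges_split n (x : 'I_n) s e : e \in pedges x s ->
  exists L u w R, x :: s = L ++ u :: w :: R /\ e = [set u; w].
Proof.
elim: s x => [|y s IH] x /=; first by rewrite inE.
rewrite !inE => /orP [/eqP -> | /IH [L [u [w [R [E1 E2]]]]]].
  by exists [::], x, y, s.
by exists (x :: L), u, w, R; rewrite E1.
Qed.

Lemma edge_split n (s : seq 'I_n) a b : [set a; b] \in cyc s -> a != b ->
  exists u w r, [/\ perm_eq s (u :: w :: r), cyc (u :: w :: r) = cyc s & [set a; b] = [set u; w]].
Proof.
case: s => [|x s] /=; first by rewrite inE.
rewrite !inE => /orP [/eqP E | /pedges_split [L [u [w [R [E1 E2]]]]]] ab.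
  case/lastP: s E => [|m l] /= E.
    have : b \in [set x; x] by rewrite -E !inE eqxx orbT.
    have : a \in [set x; x] by rewrite -E !inE eqxx.
    by rewrite !inE !orbb => /eqP ea /eqP eb; rewrite ea eb eqxx in ab.
  exists l, x, m; split.
  - by rewrite -cats1 -cat_cons perm_catC.
  - apply/setP => e; rewrite -cats1 pedges_cat last_cat /= !inE.
    by do !case: (_ == _); do !case: (_ \in _).
  - by rewrite E last_rcons.
exists u, w, (R ++ L); split.
- by rewrite E1 perm_catC.
- by rewrite -[RHS]/(cyc (x :: s)) E1 cyc_catC.
- exact: E2.
Qed.

Lemma orient n (s : seq 'I_n) a b : [set a; b] \in cyc s -> a != b ->
  exists r, perm_eq s (a :: b :: r) /\ cyc (a :: b :: r) = cyc s.
Proof.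
move=> H ab; case: (edge_split H ab) => u [w [r [ps cs E]]].
have : a \in [set u; w] by rewrite -E !inE eqxx.
have : b \in [set u; w] by rewrite -E !inE eqxx orbT.
rewrite !inE => /orP [] /eqP eb /orP [] /eqP ea; subst.
- by rewrite eqxx in ab.
- exists (rev r); split.
    apply: perm_trans ps _; apply/permP => f; rewrite /= count_rev; lia.
  rewrite -cs (_ : w :: u :: rev r = [:: w; u] ++ rev r) // cyc_catC.
  by rewrite -[RHS]cyc_rev (_ : u :: w :: r = [:: u; w] ++ r) // rev_cat.
- by exists r.
- by rewrite eqxx in ab.
Qed.

Lemma full_size n (s : seq 'I_n) : uniq s -> (forall v, v \in s) -> size s = n.
Proof.
move=> us fs; transitivity #|'I_n|; last exact: card_ord.
by rewrite -(card_uniqP us); apply: eq_card => v; rewrite fs.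
Qed.

Lemma perm_swap (T : eqType) (x y : T) D1 D2 : perm_eq (x :: D1 ++ y :: D2) (y :: rev D1 ++ x :: D2).
Proof. apply/permP => f; rewrite /= !count_cat /= count_rev; lia. Qed.

Lemma main n (q : seq 'I_n) : uniq q -> (forall v, v \in q) -> 2 < size q ->
  forall m k p, size q - k = m -> 1 < k -> uniq p -> (forall v, v \in p) ->
  take k p = take k q -> exists sq, u_switch_seq (cyc p) sq (cyc q).
Proof.
move=> uq fq sq m; elim: m => [|m IH] k p Hm k2 up fp tk.
  exists [::] => /=; congr cyc.
  rewrite -(take_oversize (n := k) (s := q)); last by lia.
  rewrite -tk take_oversize //; rewrite (full_size up fp) -(full_size uq fq); lia.
have szp : size p = size q by rewrite (full_size up fp) (full_size uq fq).
have kq : k < size q by lia.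
have y0 : 'I_n by move: (sq); case: (q) => [|h t] //.
set y := nth y0 q k.
have tq1 : take k.+1 q = rcons (take k q) y by rewrite (take_nth y0 kq).
have yP : y \notin take k q.
  by have := take_uniq k.+1 uq; rewrite tq1 rcons_uniq => /andP [].
set P := take k p.
have sP : size P = k by rewrite size_take szp kq.
have eP : p = P ++ drop k p by rewrite cat_take_drop.
have yD : y \in drop k p.
  by have := fp y; rewrite {1}eP mem_cat /P tk (negbTE yP).
move: yD eP; case: (drop k p) => [|x D'] // yD eP.
have tP1 : forall z r, take k.+1 (P ++ z :: r) = rcons (take k q) z.
  by move=> z r; rewrite take_cat sP ltnNge leqnSn /= subSnn /= take0 cats1 /P tk.
case: (x =P y) => [exy | nxy].
  apply: (IH k.+1) => //; try lia.
  by rewrite eP tP1 exy tq1.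
have yD' : y \in D' by move: yD; rewrite inE => /orP [/eqP E|//]; rewrite E in nxy.
case/splitPr: yD' eP => D1 D2 eP.
have [v0 [P' [EP P'n]]] : exists v0 P', P = v0 :: P' /\ P' != [::].
  move: sP; case: (P) => [|v0 [|t P']] /= sz; try lia.
  by exists v0, (t :: P').
have [z [T [eZT Tn]]] : exists z T, D2 ++ v0 :: P' = z :: T /\ T != [::].
  case: (D2) => [|d D2'] /=; first by exists v0, P'.
  by exists d, (D2' ++ v0 :: P'); split => //; case: D2'.
set p' := P ++ y :: rev D1 ++ x :: D2.
have r1 : perm_eq p (x :: D1 ++ y :: z :: T) /\ cyc p = cyc (x :: D1 ++ y :: z :: T).
  rewrite eP EP -eZT (_ : x :: D1 ++ y :: D2 ++ v0 :: P' = (x :: D1 ++ y :: D2) ++ v0 :: P'); last by rewrite /= -catA.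
  split; [by rewrite perm_catC perm_refl | by rewrite cyc_catC].
have r2 : perm_eq p' (y :: rev D1 ++ x :: z :: T) /\ cyc p' = cyc (y :: rev D1 ++ x :: z :: T).
  rewrite /p' EP -eZT (_ : y :: rev D1 ++ x :: D2 ++ v0 :: P' = (y :: rev D1 ++ x :: D2) ++ v0 :: P'); last by rewrite /= -catA.
  split; [by rewrite perm_catC perm_refl | by rewrite cyc_catC].
have pp' : perm_eq p p'.
  by rewrite eP /p' perm_cat2l perm_swap.
have up' : uniq p' by rewrite -(perm_uniq pp').
have fp' v : v \in p' by rewrite -(perm_mem pp').
have u1 : uniq (x :: D1 ++ y :: z :: T) by rewrite -(perm_uniq r1.1).
case: (two_opt u1 Tn) => I tE.
case: r1 => _ ->.
case: (IH k.+1 p' _ _ up' fp'); [by rewrite subnS Hm | exact: ltnW | by rewrite /p' tP1 tq1 | ].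
move=> sq' Hsq'; exists ((last z T, x, y, z) :: sq'); split; last by rewrite tE -r2.2.
split; first exact: tau_neq I.
rewrite tE -r2.2; apply: cg_unicyclic.
  apply: cyc_cycle_graph => //; by rewrite (full_size up' fp') -(full_size uq fq).
by rewrite /p' EP /=; apply/set0Pn; eexists; apply/setU1P; left; reflexivity.
Qed.
Unset Implicit Arguments. Set Strict Implicit.

Theorem lemma3p6 (n : nat) (C C' : graph n) :
  cycle_graph C -> cycle_graph C' -> deg_seq C = deg_seq C' ->
  forall e : {set 'I_n}, e \in C -> e \in C' ->
  exists s : seq (switch n), u_switch_seq C s C'.
Proof.
move=> cC cC' _ e eC eC'.
have nC : C != set0 by apply/set0Pn; exists e.
have nC' : C' != set0 by apply/set0Pn; exists e.
case: (cg_struct cC nC) => s [us ss fs Cs].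
case: (cg_struct cC' nC') => s' [us' ss' fs' Cs'].
have := cC; case/and3P => sC _ _.
have := forallP sC e; rewrite eC => /cards2P [a [b [ab eE]]].
have Hs : [set a; b] \in cyc s by rewrite -Cs -eE.
have Hs' : [set a; b] \in cyc s' by rewrite -Cs' -eE.
have [r [pr cr]] := orient Hs ab.
have [r' [pr' cr']] := orient Hs' ab.
have up : uniq (a :: b :: r) by rewrite -(perm_uniq pr).
have fp v : v \in a :: b :: r by rewrite -(perm_mem pr).
have uq : uniq (a :: b :: r') by rewrite -(perm_uniq pr').
have fq v : v \in a :: b :: r' by rewrite -(perm_mem pr').
have sq : 2 < size (a :: b :: r') by rewrite -(perm_size pr').
rewrite Cs Cs' -cr -cr'.
apply: (main uq fq sq (erefl _) (isT : 1 < 2) up fp); by rewrite /= ?take0.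
Qed.
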